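(* Let $X$ be a reflexive Banach space, let $R:X\to X$ be a bounded linear isomorphism of $X$ onto $X$, and let $L:X\times X^*\to\mathbb{R}\cup\{+\infty\}$ be convex, lower semicontinuous and not identically $+\infty$. Assume $L$ is partially $R$-antiselfdual, i.e. $L^*(0,x)=L(-Rx,0)$ for all $x\in X$, and that for some $x_0\in X$ the function $p\mapsto L(x_0,p)$ is bounded above on a neighborhood of the origin in $X^*$. Then there exists $\bar x\in X$ such that $$L(-R\bar x,0)=\inf_{x\in X}L(x,0)=0\qquad\text{and}\qquad (0,\bar x)\in\partial L(-R\bar x,0).$$
   Context: For a function $L$ on $X\times X^*$, its Legendre–Fenchel transform (in both variables) is $L^*(q,y)=\sup\{\langle q,x\rangle+\langle y,p\rangle-L(x,p):x\in X,\ p\in X^*\}$ for $(q,y)\in X^*\times X$ (with $X^{**}=X$). $\partial L$ denotes the convex subdifferential of $L$ on $X\times X^*$, with values in $X^*\times X$. *)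

(* Defs.v *)
From HB Require Import structures.
From mathcomp Require Import all_boot all_order all_algebra.
From mathcomp Require Import all_classical all_reals all_analysis.
Set Implicit Arguments. Unset Strict Implicit. Unset Printing Implicit Defensive.
Import Order.TTheory GRing.Theory Num.Theory.
Import numFieldNormedType.Exports.
Local Open Scope classical_set_scope.
Local Open Scope ring_scope.

Section Defs.
Variables (R : realType) (X : normedModType R).

(* Elements of the dual X^*: continuous linear functionals X -> R. *)
Definition is_dual (p : X -> R) : Prop :=
  (forall (a : R) (x y : X), p (a *: x + y) = a * p x + p y) /\ continuous p.

Definition dnorm (p : X -> R) : R := sup [set `|p x| | x in [set x : X | `|x| <= 1]].

Definition bidual_elem (phi : (X -> R) -> R) : Prop :=
  (forall (a : R) (p q : X -> R), is_dual p -> is_dual q ->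
      phi (fun x => a * p x + q x) = a * phi p + phi q) /\
  exists C : R, forall p, is_dual p -> `|phi p| <= C * dnorm p.

Definition reflexive_space : Prop :=
  forall phi, bidual_elem phi -> exists x : X, forall p, is_dual p -> phi p = p x.

Definition lin_iso (T : X -> X) : Prop :=
  (forall (a : R) (x y : X), T (a *: x + y) = a *: T x + T y) /\ continuous T /\
  exists S : X -> X, continuous S /\ cancel T S /\ cancel S T.

Local Open Scope ereal_scope.

(* L : X x X^* -> R u {+oo} *)
Definition no_minfty (L : X -> (X -> R) -> \bar R) : Prop :=
  forall x p, is_dual p -> L x p != -oo.

Definition proper_fun (L : X -> (X -> R) -> \bar R) : Prop :=
  exists x p, is_dual p /\ L x p != +oo.

Definition convex_fun (L : X -> (X -> R) -> \bar R) : Prop :=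
  forall (l : R) (a b : X) (p q : X -> R), (0 <= l <= 1)%R -> is_dual p -> is_dual q ->
    L (l *: a + (1 - l) *: b)%R (fun x => l * p x + (1 - l) * q x)%R
      <= l%:E * L a p + (1 - l)%:E * L b q.

Definition lsc_fun (L : X -> (X -> R) -> \bar R) : Prop :=
  forall a p (t : R), is_dual p -> t%:E < L a p ->
    exists2 d : R, (0 < d)%R & forall b q, is_dual q ->
      (`|b - a|%R < d)%R -> (dnorm (fun x => q x - p x) < d)%R -> t%:E < L b q.

(* Legendre-Fenchel transform, with X^** identified with X *)
Definition LF (L : X -> (X -> R) -> \bar R) (q : X -> R) (y : X) : \bar R :=
  ereal_sup [set (q a + p y)%:E - L a p | a in [set: X] & p in is_dual].

Definition subdiff (L : X -> (X -> R) -> \bar R) (a : X) (p : X -> R)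
    (q : X -> R) (y : X) : Prop :=
  L a p \is a fin_num /\
  forall b r, is_dual r -> L a p + (q (b - a) + (r y - p y))%:E <= L b r.

End Defs.

(* Main.v *)
Require Import Defs.
From HB Require Import structures.
From mathcomp Require Import all_boot all_order all_algebra.
From mathcomp Require Import all_classical all_reals all_analysis.
From mathcomp Require Import ring lra.
Set Implicit Arguments. Unset Strict Implicit. Unset Printing Implicit Defensive.
Import Order.TTheory GRing.Theory Num.Theory.
Import numFieldNormedType.Exports.
Local Open Scope classical_set_scope.
Local Open Scope ring_scope.
Section HBsec.
Variables (R : realType) (V : lmodType R) (D : set V).
Hypothesis D0 : D 0.
Hypothesis DD : forall (a : R) u v, D u -> D v -> D (a *: u + v).

Lemma DN u : D u -> D (- u).
Proof. by move=> Du; have := DD (-1) Du D0; rewrite addr0 scaleN1r. Qed.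
Lemma DA u v : D u -> D v -> D (u + v).
Proof. by move=> Du Dv; have := DD 1 Du Dv; rewrite scale1r. Qed.
Lemma DZ (a : R) u : D u -> D (a *: u).
Proof. by move=> Du; have := DD a Du D0; rewrite addr0. Qed.

Definition sublin (s : V -> R) :=
  (forall u v, D u -> D v -> s (u + v) <= s u + s v) /\
  (forall (a : R) u, 0 < a -> D u -> s (a *: u) = a * s u).

Lemma sublin0 s : sublin s -> s 0 = 0.
Proof.
move=> [_ hs]; have := hs 2 0 (ltr0Sn _ 1) D0; rewrite scaler0 => h.
lra.
Qed.

Lemma sublinZ0 s (a : R) u : sublin s -> 0 <= a -> D u -> s (a *: u) = a * s u.
Proof.
move=> hs; rewrite le0r => /orP[/eqP ->|a0] Du; last exact: hs.2.
by rewrite scale0r mul0r sublin0.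
Qed.

Lemma sublinN s u : sublin s -> D u -> 0 <= s u + s (- u).
Proof. by move=> hs Du; rewrite -(sublin0 hs) -(subrr u); apply: hs.1 => //; exact: DN. Qed.

Lemma minimal_linear s : sublin s ->
  (forall s', sublin s' -> (forall u, D u -> s' u <= s u) ->
      forall u, D u -> s u <= s' u) ->
  forall p, D p -> s (- p) = - s p.
Proof.
move=> hs hmin p Dp.
pose E x := [set s (x + t *: p) - t * s p | t in [set t : R | 0 <= t]].
have Elb x : D x -> lbound (E x) (- s (- x)).
  move=> Dx _ [t /= t0 <-].
  have Dtp : D (t *: p) := DZ t Dp.
  have : s (t *: p) <= s (x + t *: p) + s (- x).
    by rewrite -{1}(addKr x (t *: p)) addrC; apply: hs.1 => //; [exact: DA|exact: DN].
  by rewrite sublinZ0 //; lra.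
have Ene x : E x !=set0 by exists (s (x + 0 *: p) - 0 * s p); rewrite /E /=; exists 0 => //=.
have Einf x t : D x -> 0 <= t -> inf (E x) <= s (x + t *: p) - t * s p.
  by move=> Dx t0; apply: ge_inf; [exists (- s (- x)); exact: Elb|exists t].
pose s' x := inf (E x).
have s's x : D x -> s' x <= s x.
  by move=> Dx; have := Einf x 0 Dx (lexx _); rewrite scale0r addr0 mul0r subr0.
have hs' : sublin s'.
  split.
  - move=> u v Du Dv.
    have H : forall t w, 0 <= t -> 0 <= w ->
        s' (u + v) <= (s (u + t *: p) - t * s p) + (s (v + w *: p) - w * s p).
      move=> t w t0 w0.
      apply: le_trans (Einf _ (t + w) (DA Du Dv) (addr_ge0 t0 w0)) _.
      have -> : u + v + (t + w) *: p = (u + t *: p) + (v + w *: p).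
        by rewrite scalerDl addrACA.
      have := hs.1 _ _ (DA Du (DZ t Dp)) (DA Dv (DZ w Dp)).
      rewrite mulrDl; lra.
    have H2 : forall w, 0 <= w -> s' (u + v) - (s (v + w *: p) - w * s p) <= s' u.
      move=> w w0; apply: lb_le_inf => // _ [t /= t0 <-].
      have := H t w t0 w0; lra.
    have : s' (u + v) - s' u <= s' v.
      apply: lb_le_inf => // _ [w /= w0 <-]; have := H2 w w0; lra.
    lra.
  - move=> a u a0 Du.
    apply/eqP; rewrite eq_le; apply/andP; split.
    + rewrite -ler_pdivrMl //; apply: lb_le_inf => // _ [t /= t0 <-].
      rewrite ler_pdivrMl //.
      have := Einf _ (a * t) (DZ a Du) (mulr_ge0 (ltW a0) t0).
      rewrite -scalerA -scalerDr (sublinZ0 hs (ltW a0)); last by apply: DA; [|apply: DZ].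
      by move=> h; apply: (le_trans h); rewrite mulrBr mulrA.
    + apply: lb_le_inf => // _ [t /= t0 <-].
      have := Einf _ (t / a) Du (divr_ge0 t0 (ltW a0)).
      have -> : a *: u + t *: p = a *: (u + (t / a) *: p).
        by rewrite scalerDr scalerA mulrCA mulfV ?gt_eqF // mulr1.
      rewrite (sublinZ0 hs (ltW a0)); last by apply: DA; [|apply: DZ].
      move=> h; have := ler_wpM2l (ltW a0) h.
      by rewrite mulrBr mulrA mulrCA mulfV ?gt_eqF // mulr1.
have := hmin s' hs' s's (- p) (DN Dp).
move=> /le_trans/(_ (Einf (- p) 1 (DN Dp) ler01)).
rewrite scale1r addNr sublin0 // mul1r sub0r => h1.
have := sublinN hs Dp; lra.
Qed.

Lemma minimal_linear2 s : sublin s ->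
  (forall p, D p -> s (- p) = - s p) ->
  forall (a : R) u v, D u -> D v -> s (a *: u + v) = a * s u + s v.
Proof.
move=> hs hN.
have hadd u v : D u -> D v -> s (u + v) = s u + s v.
  move=> Du Dv; apply/eqP; rewrite eq_le hs.1 //=.
  have := hs.1 _ _ (DN Du) (DN Dv); rewrite -opprD hN ?hN //; last exact: DA.
  lra.
move=> a u v Du Dv; rewrite hadd //; last exact: DZ.
congr (_ + _); have [a0|a0] := leP 0 a; first exact: sublinZ0.
have a0' : 0 <= - a by rewrite oppr_ge0 ltW.
have -> : a *: u = - ((- a) *: u) by rewrite scaleNr opprK.
by rewrite hN ?(sublinZ0 hs a0') ?mulNr ?opprK //; apply: DZ.
Qed.

End HBsec.
Section HBZ.
Variables (R : realType) (V : lmodType R) (D : set V).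
Hypothesis D0 : D 0.
Hypothesis DD : forall (a : R) u v, D u -> D v -> D (a *: u + v).

Lemma hahn_banach (q : V -> R) : sublin D q ->
  exists f : V -> R, (forall (a : R) u v, D u -> D v -> f (a *: u + v) = a * f u + f v)
    /\ (forall u, D u -> f u <= q u).
Proof.
move=> hq.
pose T := {s : V -> R | sublin D s /\ forall u, D u -> s u <= q u}.
pose t0 : T := exist _ q (conj hq (fun u _ => lexx (q u))).
pose Rl (s t : T) : bool := `[< forall u, D u -> sval t u <= sval s u >].
have Rlt0 s : Rl t0 s by apply/asboolP => u Du; case: s => s [? hs] /=; exact: hs.
have [t tmax] : exists t, premaximal Rl t.
  apply: (ZL_preorder t0).
  - by move=> t; apply/asboolP.
  - move=> r s t /asboolP h1 /asboolP h2; apply/asboolP => u Du.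
    exact: le_trans (h2 _ Du) (h1 _ Du).
  move=> A Atot.
  pose B := A `|` [set t0].
  have Btot : total_on B Rl.
    move=> s1 s2 [A1|->] [A2|->]; [exact: Atot|right|left|left]; exact: Rlt0.
  pose m u := inf [set sval s u | s in B].
  have Bne u : [set sval s u | s in B] !=set0 by exists (q u), t0 => //; right.
  have Blb u : D u -> has_lbound [set sval s u | s in B].
    move=> Du; exists (- q (- u)) => _ [[s [hs sq]] _ <-] /=.
    have := sublinN D0 DD hs Du; have := sq _ (DN D0 DD Du); lra.
  have mle u s : D u -> B s -> m u <= sval s u.
    by move=> Du Bs; apply: ge_inf; [exact: Blb|exists s].
  have hm : sublin D m.
    split.
    - move=> u v Du Dv.
      have H s1 s2 : B s1 -> B s2 -> m (u + v) <= sval s1 u + sval s2 v.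
        move=> B1 B2; have [/asboolP h|/asboolP h] := Btot _ _ B1 B2.
        + apply: le_trans (mle _ _ (DA DD Du Dv) B2) _.
          case: s2 {B2 h} (h u Du) => s2 [hs2 _] /= h.
          have := hs2.1 _ _ Du Dv; lra.
        + apply: le_trans (mle _ _ (DA DD Du Dv) B1) _.
          case: s1 {B1 h} (h v Dv) => s1 [hs1 _] /= h.
          have := hs1.1 _ _ Du Dv; lra.
      have H2 s2 : B s2 -> m (u + v) - sval s2 v <= m u.
        move=> B2; apply: lb_le_inf => // _ [s1 B1 <-]; have := H _ _ B1 B2; lra.
      suff : m (u + v) - m u <= m v by lra.
      apply: lb_le_inf => // _ [s2 B2 <-]; have := H2 _ B2; lra.
    - move=> a u a0 Du.
      have sZ (s : T) : sval s (a *: u) = a * sval s u by case: s => s [hs _] /=; exact: hs.2.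
      apply/eqP; rewrite eq_le; apply/andP; split.
      + rewrite -ler_pdivrMl //; apply: lb_le_inf => // _ [s Bs <-].
        rewrite ler_pdivrMl // -sZ; exact: mle _ _ (DZ D0 DD a Du) Bs.
      + rewrite {2}/m; apply: lb_le_inf => // _ [s Bs <-].
        rewrite sZ ler_pM2l //; exact: mle.
  have mq u : D u -> m u <= q u by move=> Du; apply: (mle u t0 Du); right.
  exists (exist _ m (conj hm mq)) => s As; apply/asboolP => u Du /=.
  by apply: mle => //; left.
case: t tmax => f [hf fq] tmax.
exists f; split => //.
apply: minimal_linear2 => //.
apply: minimal_linear => // s' hs' s'f u Du.
have s'q v : D v -> s' v <= q v by move=> Dv; exact: le_trans (s'f _ Dv) (fq _ Dv).
have /asboolP := tmax (exist _ s' (conj hs' s'q)) (introT (asboolP _) s'f).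
by move/(_ u Du).
Qed.
End HBZ.
Section Dual.
Variables (R : realType) (X : normedModType R).

Lemma is_dual0 : is_dual (0 : X -> R).
Proof.
split; first by move=> a x y /=; rewrite mulr0 addr0.
by move=> x; exact: cst_continuous.
Qed.

Lemma is_dualD (a : R) (p q : X -> R) : is_dual p -> is_dual q -> is_dual (a *: p + q).
Proof.
move=> [lp cp] [lq cq]; split.
  move=> b x y; change (a * p (b *: x + y) + q (b *: x + y) = b * (a * p x + q x) + (a * p y + q y)).
  by rewrite lp lq; ring.
move=> x; apply: continuousD; last exact: cq.
apply: (@continuousM _ _ (fun=> a) p x); [exact: cst_continuous|exact: cp].
Qed.

Lemma is_dualZ (a : R) (p : X -> R) : is_dual p -> is_dual (a *: p).
Proof. by move=> hp; have := is_dualD a hp is_dual0; rewrite addr0. Qed.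

Lemma is_dualN (p : X -> R) : is_dual p -> is_dual (- p).
Proof. by move=> hp; have := is_dualZ (-1) hp; rewrite scaleN1r. Qed.

Lemma dual_at0 (p : X -> R) : is_dual p -> p 0 = 0.
Proof. by move=> [lp _]; have := lp 1 0 0; rewrite scale1r addr0 mul1r; lra. Qed.

Lemma dual_scale (p : X -> R) (a : R) x : is_dual p -> p (a *: x) = a * p x.
Proof. by move=> hp; have := hp.1 a x 0; rewrite addr0 dual_at0 // addr0. Qed.

Lemma dual_bounded (p : X -> R) : is_dual p ->
  exists2 B : R, 0 <= B & forall x : X, `|x| <= 1 -> `|p x| <= B.
Proof.
move=> hp; have := cvgr_dist_lt _ _ (hp.2 0) _ ltr01.
rewrite dual_at0 // => h.
have [/= d d0 hd] := (@nbhs_norm0P _ X (fun t => `|0 - p t| < 1)).1 (h _).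
exists (2 / d); first by rewrite divr_ge0 // ltW.
move=> x x1.
have hx : `|(d / 2) *: x| < d.
  rewrite normrZ gtr0_norm ?divr_gt0 //.
  have : d / 2 * `|x| <= d / 2 by apply: ler_piMr => //; rewrite divr_ge0 // ltW.
  lra.
have := hd _ hx; rewrite sub0r normrN dual_scale // normrM gtr0_norm ?divr_gt0 //.
move=> h1; rewrite ler_pdivlMr // mulrC.
have : d / 2 * `|p x| * 2 = d * `|p x| by field.
lra.
Qed.

Lemma dnorm_ub (p : X -> R) x : is_dual p -> `|x| <= 1 -> `|p x| <= dnorm p.
Proof.
move=> hp x1; have [B B0 hB] := dual_bounded hp.
apply: ub_le_sup; last by exists x.
by exists B => _ [y y1 <-]; exact: hB.
Qed.

Lemma dnorm_le (p : X -> R) (B : R) : (forall x : X, `|x| <= 1 -> `|p x| <= B) -> dnorm p <= B.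
Proof.
move=> hB; apply: ge_sup; first by exists `|p 0|, 0 => //=; rewrite normr0.
by move=> _ [y y1 <-]; exact: hB.
Qed.

Lemma dnorm_ge0 (p : X -> R) : is_dual p -> 0 <= dnorm p.
Proof.
move=> hp; have h0 : `|(0 : X)| <= 1 by rewrite normr0.
exact: le_trans (normr_ge0 _) (dnorm_ub hp h0).
Qed.

Lemma dnormZ (p : X -> R) (t : R) : is_dual p -> 0 <= t -> dnorm (t *: p) <= t * dnorm p.
Proof.
move=> hp t0; apply: dnorm_le => x x1 /=.
by rewrite normrM ger0_norm // ler_wpM2l // dnorm_ub.
Qed.

Lemma dnormN (p : X -> R) : is_dual p -> dnorm (- p) <= dnorm p.
Proof. by move=> hp; apply: dnorm_le => x x1 /=; rewrite normrN dnorm_ub. Qed.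

End Dual.
Section Main.
Variables (R : realType) (X : normedModType R) (L : X -> (X -> R) -> \bar R).
Hypothesis Lnm : no_minfty L.
Hypothesis Lconv : convex_fun L.
Variables (c M r : R) (x0 : X).
Hypothesis c_le : forall b, (c%:E <= L b (0 : X -> R)%R)%E.
Hypothesis r0 : 0 < r.
Hypothesis Mb : forall p, is_dual p -> dnorm p < r -> (L x0 p <= M%:E)%E.

Definition Sset (p : X -> R) := [set y : R | exists t a, 0 < t /\ L a (t *: p) \is a fin_num
   /\ y = (fine (L a (t *: p)) - c) / t].

Lemma conv_step (t t' : R) a a' (p p' : X -> R) : 0 < t -> 0 < t' -> is_dual p -> is_dual p' ->
  L a (t *: p) \is a fin_num -> L a' (t' *: p') \is a fin_num ->
  exists2 z, Sset (p + p') z &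
    z <= (fine (L a (t *: p)) - c) / t + (fine (L a' (t' *: p')) - c) / t'.
Proof.
move=> t0 t'0 hp hp' h1 h2.
pose l := t' / (t + t'); pose T := t * t' / (t + t').
have tt0 : 0 < t + t' by rewrite addr_gt0.
have hl : 0 <= l <= 1.
  apply/andP; split; first by rewrite divr_ge0 // ltW.
  by rewrite ler_pdivrMr // mul1r lerDr ltW.
have feq : (fun x => l * (t *: p) x + (1 - l) * (t' *: p') x) = T *: (p + p').
  apply/funext => x; rewrite /l /T /=.
  change (t' / (t + t') * (t * p x) + (1 - t' / (t + t')) * (t' * p' x) =
     t * t' / (t + t') * (p x + p' x)).
  field; by rewrite gt_eqF.
have := Lconv a a' hl (is_dualZ t hp) (is_dualZ t' hp'); rewrite feq.
set Lc := L _ (T *: (p + p')).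
rewrite -(fineK h1) -(fineK h2) -!EFinM -EFinD => hle.
have T0 : 0 < T by rewrite /T divr_gt0 // mulr_gt0.
have Lcfin : Lc \is a fin_num.
  rewrite fin_numE Lnm /=; last by apply: is_dualZ; have := is_dualD 1 hp hp'; rewrite scale1r.
  apply/eqP => h; rewrite h in hle.
  by rewrite leye_eq in hle.
exists ((fine Lc - c) / T).
  rewrite /Sset /=; exists T; exists (l *: a + (1 - l) *: a'); split => //; split => //.
move: hle; rewrite -(fineK Lcfin) lee_fin.
set fc := fine Lc; set f1 := fine (L a (t *: p)); set f2 := fine (L a' (t' *: p')).
move=> hle.
have e1 : (fc - c) / T = (t + t') * (fc - c) / (t * t').
  rewrite /T; field; apply/and3P; split; rewrite gt_eqF //.
have e2 : (f1 - c) / t + (f2 - c) / t' = (t' * (f1 - c) + t * (f2 - c)) / (t * t').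
  field; apply/andP; split; rewrite gt_eqF //.
rewrite e1 e2 ler_pM2r ?invr_gt0 ?mulr_gt0 //.
have : (t + t') * fc <= t' * f1 + t * f2.
  have := ler_wpM2l (ltW tt0) hle.
  have -> : (t + t') * (l * f1 + (1 - l) * f2) = t' * f1 + t * f2.
    rewrite /l; field; rewrite gt_eqF //.
  by [].
lra.
Qed.


Lemma S0_ge0 y : Sset 0 y -> 0 <= y.
Proof.
move=> [t [a [t0 [fin ->]]]]; apply: divr_ge0; last exact: ltW.
rewrite subr_ge0.
move: fin; rewrite scaler0 => fin.
by rewrite -lee_fin fineK //; exact: c_le.
Qed.

Lemma S_pair (p : X -> R) y z : is_dual p -> Sset p y -> Sset (- p) z -> 0 <= y + z.
Proof.
move=> hp [t [a [t0 [f1 ->]]]] [t' [a' [t'0 [f2 ->]]]].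
have [w Sw wle] := conv_step t0 t'0 hp (is_dualN hp) f1 f2.
move: Sw; rewrite addrN => /S0_ge0; lra.
Qed.

Lemma S_bound (p : X -> R) (t : R) : is_dual p -> 0 < t -> dnorm (t *: p) < r ->
  exists2 y, Sset p y & y <= (M - c) / t.
Proof.
move=> hp t0 ht.
have hM := Mb (is_dualZ t hp) ht.
have fin : L x0 (t *: p) \is a fin_num.
  rewrite fin_numE Lnm /=; last exact: is_dualZ.
  by apply/eqP => h; rewrite h leye_eq in hM.
exists ((fine (L x0 (t *: p)) - c) / t); first by exists t, x0.
rewrite ler_pM2r ?invr_gt0 // lerD2r -lee_fin fineK //.
Qed.

Lemma S_ne (p : X -> R) : is_dual p -> Sset p !=set0.
Proof.
move=> hp; have d0 := dnorm_ge0 hp.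
pose t := r / (dnorm p + 1).
have t0 : 0 < t by rewrite divr_gt0 // ltr_wpDl.
have ht : dnorm (t *: p) < r.
  apply: le_lt_trans (dnormZ hp (ltW t0)) _.
  rewrite /t mulrAC ltr_pdivrMr ?ltr_wpDl // mulrDr mulr1 ltrDl //.
by have [y Sy _] := S_bound hp t0 ht; exists y.
Qed.

Lemma S_lb (p : X -> R) : is_dual p -> has_lbound (Sset p).
Proof.
move=> hp; have [z Sz] := S_ne (is_dualN hp).
by exists (- z) => y Sy; have := S_pair hp Sy Sz; lra.
Qed.

Definition qf (p : X -> R) := inf (Sset p).

Lemma qf_le (p : X -> R) y : is_dual p -> Sset p y -> qf p <= y.
Proof. by move=> hp Sy; apply: ge_inf => //; exact: S_lb. Qed.

Lemma qf_sublin : sublin (@is_dual R X) qf.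
Proof.
split.
- move=> u v hu hv.
  have H y z : Sset u y -> Sset v z -> qf (u + v) <= y + z.
    move=> [t [a [t0 [f1 ->]]]] [t' [a' [t'0 [f2 ->]]]].
    have [w Sw wle] := conv_step t0 t'0 hu hv f1 f2.
    apply: le_trans wle; apply: qf_le Sw.
    by have := is_dualD 1 hu hv; rewrite scale1r.
  have H2 z : Sset v z -> qf (u + v) - z <= qf u.
    move=> Sz; apply: lb_le_inf; first exact: S_ne.
    by move=> y Sy; have := H _ _ Sy Sz; lra.
  suff : qf (u + v) - qf u <= qf v by lra.
  apply: lb_le_inf; first exact: S_ne.
  by move=> z Sz; have := H2 _ Sz; lra.
- move=> a u a0 hu.
  have hau := is_dualZ a hu.
  apply/eqP; rewrite eq_le; apply/andP; split.
  + rewrite -ler_pdivrMl //; apply: lb_le_inf; first exact: S_ne.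
    move=> _ [t [b [t0 [f1 ->]]]].
    rewrite ler_pdivrMl //.
    apply: qf_le => //.
    exists (t / a), b; split; first by rewrite divr_gt0.
    rewrite scalerA mulfVK ?gt_eqF //; split => //.
    by field; rewrite !gt_eqF.
  + rewrite {2}/qf; apply: lb_le_inf; first exact: S_ne.
    move=> _ [t [b [t0 [f1 ->]]]].
    move: f1; rewrite scalerA => f1.
    rewrite -ler_pdivlMl //.
    apply: qf_le => //.
    exists (t * a), b; split; first by rewrite mulr_gt0.
    split => //; by field; rewrite !gt_eqF.
Qed.

Lemma qf_le_L (p : X -> R) a : is_dual p -> L a p \is a fin_num -> qf p <= fine (L a p) - c.
Proof.
move=> hp fin; apply: le_trans (qf_le hp _) _.
  by exists 1, a; rewrite scale1r; split => //.
by rewrite divr1.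
Qed.

Lemma cM : c <= M.
Proof.
have h0 : dnorm (0 : X -> R) < r.
  apply: le_lt_trans r0; apply: dnorm_le => x _ /=; rewrite normr0 //.
have := Mb (@is_dual0 R X) h0.
have := c_le x0.
move=> h1 h2; have := le_trans h1 h2; rewrite lee_fin //.
Qed.

Lemma qf_le_K (p : X -> R) : is_dual p -> qf p <= (2 * (M - c) / r) * dnorm p.
Proof.
move=> hp; have d0 := dnorm_ge0 hp; have hcM := cM.
rewrite le0r in d0; case/orP: d0 => [/eqP d0|d0].
  rewrite d0 mulr0; apply/negP => /negP; rewrite -ltNge => qp.
  pose t := (M - c + 1) / qf p.
  have t0 : 0 < t by rewrite divr_gt0 //; lra.
  have ht : dnorm (t *: p) < r.
    by apply: le_lt_trans (dnormZ hp (ltW t0)) _; rewrite d0 mulr0.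
  have [y Sy yle] := S_bound hp t0 ht.
  have := qf_le hp Sy.
  have : (M - c) / t < qf p.
    rewrite /t invf_div mulrA ltr_pdivrMr; last lra.
    nra.
  lra.
pose t := r / (2 * dnorm p).
have t0 : 0 < t by rewrite divr_gt0 // mulr_gt0.
have ht : dnorm (t *: p) < r.
  apply: le_lt_trans (dnormZ hp (ltW t0)) _.
  have -> : t * dnorm p = r / 2 by rewrite /t; field; rewrite gt_eqF.
  by rewrite ltr_pdivrMr // ltr_pMr // ltr1n.
have [y Sy yle] := S_bound hp t0 ht.
apply: le_trans (qf_le hp Sy) (le_trans yle _).
have -> : (M - c) / t = 2 * (M - c) / r * dnorm p.
  by rewrite /t; field; rewrite !gt_eqF.
by [].
Qed.

End Main.

Unset Implicit Arguments.

Theorem proposition2p1 (R : realType) (X : completeNormedModType R)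
  (Rop : X -> X) (L : X -> (X -> R) -> \bar R) :
  reflexive_space X -> lin_iso Rop ->
  no_minfty L -> proper_fun L -> convex_fun L -> lsc_fun L ->
  (forall x : X, LF L (fun _ => 0) x = L (- Rop x) (fun _ => 0)) ->
  (exists x0 : X, exists2 r : R, 0 < r & exists M : R,
     forall p, is_dual p -> dnorm p < r -> (L x0 p <= M%:E)%E) ->
  exists xbar : X,
    L (- Rop xbar) (fun _ => 0) = 0%E /\
    ereal_inf (range (fun x => L x (fun _ => 0))) = 0%E /\
    subdiff L (- Rop xbar) (fun _ => 0) (fun _ => 0) xbar.
Proof.
move=> hrefl [_ [_ [S [_ [_ SR]]]]] Lnm _ Lconv _ hLF [x0 [r r0 [M Mb]]].
have d0 := @is_dual0 R X.
have Lge0 : forall b, (0 <= L b (0 : X -> R)%R)%E.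
  move=> b; have hx : - Rop (S (- b)) = b by rewrite SR opprK.
  have e := hLF (S (- b)); rewrite hx in e.
  have : (- L b 0%R <= L b 0%R)%E.
    rewrite -[X in (_ <= X)%E]e /LF; apply: ereal_sup_ubound.
    exists b => //; exists 0 => //=.
    by rewrite add0r sub0e.
  have := Lnm b _ d0.
  case: (L b 0%R) => [x| |] //= _; rewrite ?lee_fin => h; lra.
pose m0 := ereal_inf (range (fun x => L x (0 : X -> R))).
have m0ge : (0 <= m0)%E by apply: le_ereal_inf_tmp => _ [b _ <-]; exact: Lge0.
have h0 : dnorm (0 : X -> R) < r.
  apply: le_lt_trans r0; apply: dnorm_le => x _ /=; rewrite normr0 //.
have m0le : (m0 <= M%:E)%E.
  apply: le_trans (Mb _ d0 h0); apply: ereal_inf_lbound; by exists x0.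
have m0fin : m0 \is a fin_num.
  by rewrite ge0_fin_numE // (le_lt_trans m0le) ?ltey.
set c := fine m0.
have m0E : m0 = c%:E by rewrite fineK.
have c0 : 0 <= c by rewrite -lee_fin -m0E.
have c_le : forall b, (c%:E <= L b (0 : X -> R)%R)%E.
  by move=> b; rewrite -m0E; apply: ereal_inf_lbound; exists b.
have hqs := qf_sublin Lnm Lconv c_le r0 Mb.
have [f [flin fq]] := hahn_banach d0 (@is_dualD R X) hqs.
pose K := 2 * (M - c) / r.
have f0 : f 0 = 0.
  have := flin 1 0 0 d0 d0; rewrite scale1r addr0 mul1r; lra.
have fN p : is_dual p -> f (- p) = - f p.
  move=> hp; have := flin (-1) p 0 hp d0.
  by rewrite scaleN1r addr0 f0 addr0 mulN1r.
have fK p : is_dual p -> f p <= K * dnorm p.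
  move=> hp; exact: le_trans (fq _ hp) (qf_le_K Lnm Lconv c_le r0 Mb hp).
have K0 : 0 <= K.
  have cM : c <= M by rewrite -lee_fin -m0E.
  apply: divr_ge0; last exact: ltW.
  apply: mulr_ge0 => //; lra.
have hbid : bidual_elem f.
  split; first by move=> a p q hp hq; exact: (flin a p q hp hq).
  exists K => p hp; rewrite ler_norml; apply/andP; split; last exact: fK.
  have := fK _ (is_dualN hp); rewrite fN //.
  have := dnormN hp; have := ler_wpM2l K0 (dnormN hp); lra.
have [xbar hx] := hrefl f hbid.
have fL p a : is_dual p -> ((p xbar)%:E <= L a p - c%:E)%E.
  move=> hp; case hL : (L a p) => [y| |].
    rewrite -hx // -EFinB lee_fin.
    have := qf_le_L Lnm Lconv c_le r0 Mb hp (a:=a); rewrite hL /= => /(_ isT) h.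
    exact: le_trans (fq _ hp) h.
    by rewrite /= ?addye ?leey.
  by have := Lnm a _ hp; rewrite hL.
have LFle : (LF L 0%R xbar <= (- c)%:E)%E.
  apply: ge_ereal_sup => _ [a _ [p hp <-]] /=.
  rewrite add0r.
  have := fL p a hp.
  case: (L a p) (Lnm a _ hp) => [y| |] //= _.
  - rewrite -EFinB !lee_fin; lra.
  - by rewrite addeNy leNye.
have e := hLF xbar.
change (LF L 0%R xbar = L (- Rop xbar) 0%R) in e.
have hge := Lge0 (- Rop xbar).
rewrite e in LFle.
have cz : c = 0.
  have := le_trans hge LFle; rewrite lee_fin; lra.
have Lz : L (- Rop xbar) 0%R = 0%E.
  by apply/eqP; rewrite eq_le hge andbT; rewrite cz oppr0 in LFle.
exists xbar; split => //; split.
  by change (m0 = 0%E); rewrite m0E cz.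
split; first by change (L (- Rop xbar) 0%R \is a fin_num); rewrite Lz.
move=> b r' hr'; change (L (- Rop xbar) 0%R) with (L (- Rop xbar) 0%R).
rewrite Lz add0e /= add0r subr0.
have := fL r' b hr'; rewrite cz sube0 //.
Qed.
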